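(* In the Fock space setting below, let $N\in\mathbb N$, $\alpha_n\in\mathcal B_n(B)$ for $n\in\{0,1,\ldots,N\}$, fix $i\in I$ and let \[ X=\sum_{n=0}^{N-1}\big(V_{i,n}(\alpha_n)+W_{i,n}(\alpha_n)\big),\qquad Y=X+V_{i,N}(\alpha_N)+W_{i,N}(\alpha_N). \] Then for all $b_0,\ldots,b_N\in B$, \[ \mathcal E(b_0Yb_1Y\cdots b_NY)=b_0\,\alpha_N(b_1\alpha_0,b_2\alpha_0,\ldots,b_N\alpha_0)+\mathcal E(b_0Xb_1X\cdots b_NX), \] where $b_j$ acts as $\lambda(b_j)$.
   Context: Let $B$ be a unital complex Banach algebra, $I$ a set, $\mathbb N=\{1,2,\ldots\}$. $D=\ell^1(I,B)$ is the Banach space of functions $d:I\to B$ with $\sum_i\|d(i)\|<\infty$, with left $B$-action $(bd)(i)=b\,d(i)$; $\delta_i\in D$ is $1$ at $i$ and $0$ elsewhere. $\mathcal F=B\Omega\oplus\bigoplus_{k\ge1}D^{\hat\otimes k}\hat\otimes B$ ($\ell^1$-direct sum of projective tensor products), with $B\Omega$ a copy of $B$ and $\Omega$ its unit. $\lambda(b)$: $b_0\Omega\mapsto(bb_0)\Omega$, $d_1\otimes\cdots\otimes d_k\otimes b_0\mapsto(bd_1)\otimes d_2\otimes\cdots\otimes d_k\otimes b_0$. $P:\mathcal F\to B$ is the projection onto $B\Omega$ killing the other summands, $\mathcal E(X)=P(X\Omega)$. $L_i(b_0\Omega)=\delta_i\otimes b_0$, $L_i(d_1\otimes\cdots\otimes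 d_k\otimes b_0)=\delta_i\otimes d_1\otimes\cdots\otimes d_k\otimes b_0$. $\mathcal B_n(B)$ is the set of bounded multilinear maps $B^n\to B$, $\mathcal B_0(B)=B$. For $n\ge1$, $\alpha_n\in\mathcal B_n(B)$: $V_{i,n}(\alpha_n)$ and $W_{i,n}(\alpha_n)$ vanish on $B\Omega$ and on $d_1\otimes\cdots\otimes d_k\otimes b_0$ with $k<n$; for $k=n$ they give $\alpha_n(d_1(i),\ldots,d_n(i))b_0\Omega$ and $\alpha_n(d_1(i),\ldots,d_n(i))\delta_i\otimes b_0$ respectively; for $k>n$ they give $\alpha_n(d_1(i),\ldots,d_n(i))d_{n+1}\otimes\cdots\otimes d_k\otimes b_0$ and $\alpha_n(d_1(i),\ldots,d_n(i))\delta_i\otimes d_{n+1}\otimes\cdots\otimes d_k\otimes b_0$ respectively. For $\alpha_0\in B$: $V_{i,0}(\alpha_0)=\lambda(\alpha_0)$, $W_{i,0}(\alpha_0)=\lambda(\alpha_0)L_i$. *)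

(* Defs.v *)
From HB Require Import structures.
From mathcomp Require Import all_boot all_order all_algebra.
From mathcomp Require Import complex.
From Stdlib Require Import ClassicalEpsilon.
Import GRing.Theory Num.Theory.
Set Implicit Arguments. Unset Strict Implicit. Unset Printing Implicit Defensive.
Local Open Scope ring_scope.
Local Open Scope complex_scope.

Section Banach.
Variables (R : rcfType) (B : algType R[i]).

Definition cauchy_seq (nrm : B -> R) (u : nat -> B) : Prop :=
  forall e : R, 0 < e -> exists N : nat, forall m n : nat,
    (N <= m)%N -> (N <= n)%N -> nrm (u m - u n) < e.

Definition converges_to (nrm : B -> R) (u : nat -> B) (l : B) : Prop :=
  forall e : R, 0 < e -> exists N : nat, forall n : nat,
    (N <= n)%N -> nrm (u n - l) < e.

Definition banach_algebra_norm (nrm : B -> R) : Prop :=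
  [/\ (forall x, 0 <= nrm x),
      (forall x, nrm x = 0 -> x = 0),
      (forall x y, nrm (x + y) <= nrm x + nrm y),
      (forall (c : R[i]) x, (nrm (c *: x))%:C = `|c| * (nrm x)%:C) &
      (forall x y, nrm (x * y) <= nrm x * nrm y)]
  /\ (forall u, cauchy_seq nrm u -> exists l, converges_to nrm u l).

Definition upd n (x : 'I_n -> B) (j : 'I_n) (u : B) : 'I_n -> B :=
  fun k => if k == j then u else x k.

Definition bounded_multilinear (nrm : B -> R) n (f : ('I_n -> B) -> B) : Prop :=
  (forall (x : 'I_n -> B) (j : 'I_n) (c : R[i]) (u v : B),
      f (upd x j (c *: u + v)) = c *: f (upd x j u) + f (upd x j v))
  /\ exists M : R, forall x : 'I_n -> B, nrm (f x) <= M * \prod_(j < n) nrm (x j).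

End Banach.

(* The full Fock space, on its algebraic part.          *)
(* An elementary tensor is a pair (ds, b0) : seq D * B:                *)
(*   ([::], b0)               stands for  b0 Omega  (in B Omega)       *)
(*   ([:: d1; ..; dk], b0)    stands for  d1 (x) ... (x) dk (x) b0.    *)
(* A vector is a finite formal sum of elementary tensors, represented  *)
(* by the list of its summands.  Every operator of the paper maps an   *)
(* elementary tensor to a single elementary tensor or to 0, so it is   *)
(* given by a map tensor -> seq tensor, extended additively.           *)
Section Fock.
Variables (R : rcfType) (B : algType R[i]) (I : Type).

(* elements of D = l^1(I, B) are functions I -> B *)
Definition D := I -> B.
Definition tensor := (seq D * B)%type.
Definition fock := seq tensor.
Definition op := tensor -> seq tensor.

Definition app (T : op) (v : fock) : fock := flatten (map T v).
Definition opadd (S T : op) : op := fun t => S t ++ T t.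
Definition op0 : op := fun _ => [::].
Definition opsum (n : nat) (T : nat -> op) : op :=
  foldr (fun k acc => opadd (T k) acc) op0 (iota 0 n).

Definition Omega : fock := [:: ([::], 1)].

Definition P (v : fock) : B := \sum_(t <- v | nilp t.1) t.2.
Definition E (X : fock -> fock) : B := P (X Omega).

Definition delta (i : I) : D :=
  fun j => if excluded_middle_informative (j = i) then 1 else 0.

Definition actD (b : B) (d : D) : D := fun j => b * d j.

Definition lam (b : B) : op := fun t =>
  match t.1 with
  | [::] => [:: ([::], b * t.2)]
  | d1 :: ds => [:: (actD b d1 :: ds, t.2)]
  end.

Definition L (i : I) : op := fun t => [:: (delta i :: t.1, t.2)].

Definition comp (S T : op) : op := fun t => app S (T t).

(* \mathcal B_n(B): B_0 = B, and for n >= 1 (bounded multilinear) maps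
   B^n -> B; boundedness/multilinearity is imposed as a hypothesis in the
   theorem.  evalB n a x is a(x_1,..,x_n) (for n = 0 the element a). *)
Definition calB (n : nat) : Type :=
  match n with 0 => B | _.+1 => ('I_n -> B) -> B end.

Definition evalB (n : nat) : calB n -> ('I_n -> B) -> B :=
  match n as m return calB m -> ('I_m -> B) -> B with
  | 0 => fun a _ => a
  | _.+1 => fun a x => a x
  end.

Definition calB_ok (nrm : B -> R) (n : nat) : calB n -> Prop :=
  match n as m return calB m -> Prop with
  | 0 => fun _ => True
  | _.+1 => fun a => bounded_multilinear nrm a
  end.

Definition args (i : I) (n : nat) (ds : seq D) : 'I_n -> B :=
  fun j => nth (fun _ => 0) ds j i.

Definition V (i : I) (n : nat) : calB n -> op :=
  match n as m return calB m -> op with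
  | 0 => fun a0 => lam a0
  | n'.+1 => fun a t =>
      let k := size t.1 in
      if (k < n'.+1)%N then [::]
      else if k == n'.+1 then
        [:: ([::], a (args i t.1) * t.2)]
      else
        match drop n'.+1 t.1 with
        | dn1 :: rest => [:: (actD (a (args i t.1)) dn1 :: rest, t.2)]
        | [::] => [::]  (* impossible since k > n *)
        end
  end.

Definition W (i : I) (n : nat) : calB n -> op :=
  match n as m return calB m -> op with
  | 0 => fun a0 => comp (lam a0) (L i)
  | n'.+1 => fun a t =>
      let k := size t.1 in
      if (k < n'.+1)%N then [::]
      else if k == n'.+1 then
        [:: ([:: actD (a (args i t.1)) (delta i)], t.2)]
      else
        [:: (actD (a (args i t.1)) (delta i) :: drop n'.+1 t.1, t.2)]
  end.

Definition word (bs : seq B) (Y : op) : fock -> fock :=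
  foldr (fun b w => fun v => app (lam b) (app Y (w v))) id bs.

End Fock.

(* Main.v *)
Require Import Defs.
From HB Require Import structures.
From mathcomp Require Import all_boot all_order all_algebra.
From mathcomp Require Import complex.
From mathcomp Require Import reals.
From Stdlib Require Import ClassicalEpsilon FunctionalExtensionality.
From mathcomp Require Import zify.
Import GRing.Theory Num.Theory.
Local Open Scope ring_scope.
Local Open Scope complex_scope.

Set Implicit Arguments. Unset Strict Implicit.
Section Aux.
Variables (R : realType) (B : algType R[i]) (I : Type) (i : I).
Implicit Types (v : fock B I) (T : op B I) (t : tensor B I).
Local Notation lamB := (@lam R B I).

Lemma app_cons T t v : app T (t :: v) = T t ++ app T v.
Proof. by []. Qed.

Lemma app_cat T u v : app T (u ++ v) = app T u ++ app T v.
Proof. by rewrite /app map_cat flatten_cat. Qed.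

Lemma P_cat (u v : fock B I) : P (u ++ v) = P u + P v.
Proof. by rewrite /P big_cat. Qed.

Lemma P_nil : P ([::] : fock B I) = 0.
Proof. by rewrite /P big_nil. Qed.

Lemma P_app T v : P (app T v) = \sum_(t <- v) P (T t).
Proof.
elim: v => [|t v IH]; first by rewrite big_nil P_nil.
by rewrite app_cons P_cat IH big_cons.
Qed.

Lemma all_app (p : pred (tensor B I)) T v :
  all p (app T v) = all (fun t => all p (T t)) v.
Proof. by elim: v => //= t v IH; rewrite app_cons all_cat IH. Qed.

Lemma app_eq_in (Pr : pred (tensor B I)) T T' v :
  all Pr v -> (forall t, Pr t -> T t = T' t) -> app T v = app T' v.
Proof.
elim: v => //= t v IH /andP[Ht Hv] H.
by rewrite !app_cons H // IH.
Qed.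

Lemma flatten_filter_in (Pr p : pred (tensor B I)) (f : tensor B I -> fock B I) v :
  all Pr v -> (forall t, Pr t -> ~~ p t -> f t = [::]) ->
  flatten (map f v) = flatten (map f (filter p v)).
Proof.
elim: v => //= t v IH /andP[Ht Hv] H.
case: (boolP (p t)) => Hp /=; first by rewrite IH.
by rewrite H // IH.
Qed.

Lemma filter_app_lam (q : pred nat) b v :
  filter (fun u => q (size u.1)) (app (lamB b) v) =
  app (lamB b) (filter (fun u => q (size u.1)) v).
Proof.
elim: v => // [[[|d ds] x] v IH]; rewrite app_cons filter_cat IH /=;
  by case: (q _).
Qed.

Lemma lam_sz b t : all (fun u => size u.1 == size t.1) (lamB b t).
Proof. by case: t => [[|d ds] x] /=; rewrite ?eqxx. Qed.

Lemma lam_nonnil b t : ~~ nilp t.1 -> all (fun u => ~~ nilp u.1) (lamB b t).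
Proof. by case: t => [[|d ds] x]. Qed.

Lemma V_le n (a : calB B n.+1) t :
  all (fun u => (size u.1 <= size t.1)%N) (V i a t).
Proof.
rewrite /=; case: ifP => // H1; case: ifP => //= H2.
case E: (drop n.+1 t.1) => [|d r] //=.
have := size_drop n.+1 t.1; rewrite E /= => ->.
by rewrite leq_subr.
Qed.

Lemma W_le n (a : calB B n.+1) t :
  all (fun u => (size u.1 <= size t.1)%N) (W i a t).
Proof.
rewrite /=; case: ifP => // H1; case: ifP => //= H2.
  by rewrite andbT (eqP H2).
rewrite andbT size_drop; move/negbT: H1; rewrite -leqNgt => H1; lia.
Qed.

Lemma W_nonnil n (a : calB B n.+1) t :
  all (fun u => ~~ nilp u.1) (W i a t).
Proof. by rewrite /=; case: ifP => // H1; case: ifP. Qed.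

Lemma V_small n (a : calB B n.+1) t : (size t.1 < n.+1)%N -> V i a t = [::].
Proof. by move=> H /=; rewrite H. Qed.

Lemma W_small n (a : calB B n.+1) t : (size t.1 < n.+1)%N -> W i a t = [::].
Proof. by move=> H /=; rewrite H. Qed.

Lemma rest_le (alpha : forall n, calB B n) s t :
  all (fun k => 0 < k)%N s ->
  all (fun u => (size u.1 <= size t.1)%N)
    (foldr (fun k acc => opadd (opadd (V i (alpha k)) (W i (alpha k))) acc) (@op0 R B I) s t).
Proof.
elim: s => //= k s IH /andP[Hk Hs].
rewrite /opadd !all_cat IH // andbT.
case: k Hk => // k _; by rewrite V_le W_le.
Qed.

Lemma all_sub (T : Type) (a1 a2 : pred T) s : all a1 s -> (forall x, a1 x -> a2 x) -> all a2 s.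
Proof. by move=> H1 H; elim: s H1 => //= x s IH /andP[Hx Hs]; rewrite H // IH. Qed.

End Aux.


Section Main.
Variables (R : realType) (B : algType R[i]) (I : Type) (i : I) (n0 : nat)
  (alpha : forall n, calB B n) (b : nat -> B).
Local Notation lamB := (@lam R B I).
Implicit Types (v : fock B I) (t : tensor B I).

Local Notation Om := (@Omega R B I).
Let X : op B I := opsum n0.+1 (fun n => opadd (V i (alpha n)) (W i (alpha n))).
Let Y : op B I := opadd X (opadd (V i (alpha n0.+1)) (W i (alpha n0.+1))).
Let rest : op B I := foldr (fun k acc => opadd (opadd (V i (alpha k)) (W i (alpha k))) acc)
   (@op0 R B I) (iota 1 n0).

Lemma word_cons x bs T v : word (x :: bs) T v = app (lamB x) (app T (word bs T v)).
Proof. by []. Qed.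

Lemma X_split t : X t = (lamB (alpha 0%N) t ++ [:: (actD (alpha 0%N) (@delta R B I i) :: t.1, t.2)])
   ++ rest t.
Proof. by case: t. Qed.

Lemma iota_pos : all (fun k => 0 < k)%N (iota 1 n0).
Proof. by apply/allP => k; rewrite mem_iota; lia. Qed.

Lemma X_le t : all (fun u => (size u.1 <= (size t.1).+1)%N) (X t).
Proof.
rewrite X_split !all_cat /= leqnn ?andbT; apply/andP; split.
- by apply: (all_sub (lam_sz _ _)) => u /eqP ->.
- by apply: (all_sub (rest_le i alpha t iota_pos)) => u /= H; apply: leqW.
Qed.

Lemma filter_nil_all (T : Type) (p q : pred T) s : all q s -> (forall x, q x -> ~~ p x) ->
  filter p s = [::].
Proof.
elim: s => //= x s IH /andP[H1 H2] H; by rewrite (negbTE (H x H1)) IH.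
Qed.

Lemma X_filter m t : (size t.1 <= m)%N ->
  filter (fun u => size u.1 == m.+1) (X t) =
  if size t.1 == m then [:: (actD (alpha 0%N) (@delta R B I i) :: t.1, t.2)] else [::].
Proof.
move=> Hm; rewrite X_split !filter_cat.
rewrite (filter_nil_all (lam_sz _ _)); last by move=> u /eqP ->; apply/eqP; lia.
rewrite (filter_nil_all (rest_le i alpha t iota_pos)); last by move=> u /= H; rewrite neq_ltn ltnS (leq_trans H Hm).
by rewrite /= eqSS; case: (_ == _).
Qed.

Lemma Y_small t : (size t.1 < n0.+1)%N -> Y t = X t.
Proof.
by move=> H; rewrite /Y /opadd V_small // W_small //= cats0.
Qed.

Definition dsv k m : seq (D B I) :=
  map (fun j => actD (b j) (actD (alpha 0%N) (@delta R B I i))) (iota k m).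
Arguments dsv : simpl never.

Lemma size_dsv k m : size (dsv k m) = m.
Proof. by rewrite /dsv size_map size_iota. Qed.

Lemma wordX m k : (m <= n0.+1)%N ->
 [/\ word (map b (iota k m)) Y Om = word (map b (iota k m)) X Om,
     all (fun t => size t.1 <= m)%N (word (map b (iota k m)) X Om) &
     filter (fun t => size t.1 == m) (word (map b (iota k m)) X Om) = [:: (dsv k m, 1)]].
Proof.
elim: m k => [|m IH] k Hm; first by split.
have [E1 E2 E3] := IH k.+1 (ltnW Hm).
have -> : map b (iota k m.+1) = b k :: map b (iota k.+1 m) by [].
set w := word (map b (iota k.+1 m)) X Om in E2 E3 *.
have EY : app Y w = app X w.
  apply: (app_eq_in E2) => t Ht; apply: Y_small; lia.
split.
- by rewrite !word_cons E1 EY.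
- rewrite word_cons !all_app; apply: (all_sub E2) => t Ht.
  apply: (all_sub (X_le t)) => u Hu.
  by apply: (all_sub (lam_sz (b k) u)) => u' /eqP ->; lia.
- rewrite word_cons (@filter_app_lam _ _ _ (fun n => n == m.+1)) /app filter_flatten -map_comp.
  rewrite (@flatten_filter_in R B I (fun t => size t.1 <= m)%N (fun t => size t.1 == m) _ w E2); last first.
    by move=> t Ht Hn /=; rewrite X_filter // (negbTE Hn).
  by rewrite E3 /= X_filter /= size_dsv ?eqxx //=.
Qed.

Lemma P_app_app S T v : P (app S (app T v)) = \sum_(t <- v) P (app S (T t)).
Proof.
elim: v => [|t v IH]; first by rewrite big_nil P_nil.
by rewrite app_cons app_cat P_cat IH big_cons.
Qed.

Lemma P_nonnil v : all (fun u => ~~ nilp u.1) v -> P v = 0.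
Proof.
elim: v => [|t v IH]; first by rewrite P_nil.
by move=> /= /andP[H1 H2]; rewrite /P big_cons (negbTE H1); exact: IH.
Qed.

Lemma sum_filter_in (Pr p : pred (tensor B I)) (G : tensor B I -> B) v :
  all Pr v -> (forall t, Pr t -> ~~ p t -> G t = 0) ->
  \sum_(t <- v) G t = \sum_(t <- filter p v) G t.
Proof.
elim: v => [|t v IH]; first by rewrite !big_nil.
move=> /= /andP[H1 H2] H; rewrite big_cons IH //.
case: (boolP (p t)) => Hp; first by rewrite big_cons.
by rewrite H // add0r.
Qed.

Lemma final : P (word (map b (iota 0 n0.+2)) Y Om) =
  b 0%N * evalB (alpha n0.+1) (fun j : 'I_n0.+1 => b j.+1 * alpha 0%N)
  + P (word (map b (iota 0 n0.+2)) X Om).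
Proof.
have -> : map b (iota 0 n0.+2) = b 0%N :: map b (iota 1 n0.+1) by [].
have [E1 E2 E3] := @wordX n0.+1 1 (leqnn _).
rewrite (word_cons (b 0%N) (map b (iota 1 n0.+1)) Y) (word_cons (b 0%N) (map b (iota 1 n0.+1)) X) E1; set w := word _ X Om in E2 E3 *.
rewrite !P_app_app.
have HY t : P (app (lamB (b 0%N)) (Y t)) = P (app (lamB (b 0%N)) (X t))
   + (P (app (lamB (b 0%N)) (V i (alpha n0.+1) t)) + P (app (lamB (b 0%N)) (W i (alpha n0.+1) t))).
  by rewrite /Y /opadd !app_cat !P_cat.
rewrite (eq_bigr _ (fun t _ => HY t)) !big_split /=.
rewrite [X in _ + (_ + X)]big1; last first.
  move=> t _; apply: P_nonnil; rewrite all_app.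
  by apply: (all_sub (W_nonnil i (alpha n0.+1) t)) => u Hu; apply: lam_nonnil.
rewrite addr0 addrC; congr (_ + _).
rewrite (@sum_filter_in (fun t => size t.1 <= n0.+1)%N (fun t => size t.1 == n0.+1) _ w E2);
  last first.
  move=> t Ht Hn; have Hlt : (size t.1 < n0.+1)%N by rewrite ltn_neqAle Hn Ht.
  by rewrite Hlt P_nil.
rewrite E3 big_cons big_nil addr0 /= size_dsv ltnn eqxx /=.
rewrite /P big_cons big_nil /= addr0 mulr1; congr (_ * alpha n0.+1 _).
apply: functional_extensionality => j.
rewrite /args /dsv (nth_map 0%N); last by rewrite size_iota.
rewrite nth_iota // /actD /delta.
by case: (excluded_middle_informative (i = i)) => //= _; rewrite mulr1 add1n.
Qed.

End Main.

Unset Implicit Arguments. Set Strict Implicit.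
Theorem mainTheorem8
  (R : realType) (B : algType R[i]) (nrm : B -> R)
  (HB : banach_algebra_norm nrm)
  (I : Type)
  (N : nat) (HN : (1 <= N)%N)
  (alpha : forall n : nat, calB B n)
  (Halpha : forall n : nat, (n <= N)%N -> calB_ok nrm (alpha n))
  (i : I) (b : nat -> B) :
  let X : op B I := opsum N (fun n => opadd (V i (alpha n)) (W i (alpha n))) in
  let Y : op B I := opadd X (opadd (V i (alpha N)) (W i (alpha N))) in
  E (word [seq b j | j <- iota 0 N.+1] Y) =
    b 0%N * evalB (alpha N) (fun j : 'I_N => b j.+1 * alpha 0%N)
    + E (word [seq b j | j <- iota 0 N.+1] X).
Proof.
move: HN alpha Halpha; case: N => [//|n0] _ alpha _.
move=> X Y; rewrite /E.
have := (@final R B I i n0 alpha b).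
by rewrite /Y /X.
Qed.
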